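(* For each positive integer $n\ge 4$, there exists a family of $n$ digraphs of order $4^n$, each strongly connected and non symmetric, which are pairwise real strongly quasi-cospectral.
   Context: A sidigraph is a digraph (no loops, at most one arc from $u$ to $v$) with a sign $\pm1$ on each arc; its adjacency matrix has entry $\sigma(v_i,v_j)$ if there is an arc from $v_i$ to $v_j$ and $0$ otherwise, and its spectrum is the multiset of eigenvalues of this matrix. An (unsigned) digraph is identified with the sidigraph having all arcs positive. A sidigraph on a digraph $D$ is a sidigraph whose underlying digraph is $D$. Two (si)digraphs are cospectral if they have the same spectrum. The sign of a cycle is the product of its arc signs; a sidigraph is cycle balanced if every directed cycle is positive. A digraph is symmetric if whenever $(u,v)$ is an arc so is $(v,u)$; it is strongly connected in the usual sense. Two digraphs $D_1,D_2$ are real strongly quasi-cospectral if $D_1$ and $D_2$ are cospectral with all eigenvalues real, and there exist non cycle balanced sidigraphs $S_1$ on $D_1$ and $S_2$ on $D_2$ that are cospectral with all eigenvalues real. *)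

(* Defs.v *)
From HB Require Import structures.
From mathcomp Require Import all_boot all_order all_algebra all_fingroup all_field.
Set Implicit Arguments. Unset Strict Implicit. Unset Printing Implicit Defensive.
Import Order.TTheory GRing.Theory Num.Theory.
Local Open Scope ring_scope.

(* A digraph on the vertex set 'I_N is an arc relation D (arc u -> v iff D u v);
   at most one arc from u to v is automatic; we require no loops. *)
Definition digraph (N : nat) (D : rel 'I_N) : Prop := forall v, ~~ D v v.

(* A sidigraph on D is given by a sign assignment: sg u v = true means the
   arc (u,v) is negative (sign -1), false means positive (sign +1).
   Values of sg on non-arcs are irrelevant. *)
Definition sign_of (b : bool) : algC := (-1) ^+ b.

Definition sadj (N : nat) (D : rel 'I_N) (sg : 'I_N -> 'I_N -> bool) : 'M[algC]_N :=
  \matrix_(i, j) (if D i j then sign_of (sg i j) else 0).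

Definition adj (N : nat) (D : rel 'I_N) : 'M[algC]_N := sadj D (fun _ _ => false).

Definition is_spectrum (N : nat) (A : 'M[algC]_N) (s : seq algC) : Prop :=
  char_poly A = \prod_(a <- s) ('X - a%:P).

Definition real_cospectral (N : nat) (A B : 'M[algC]_N) : Prop :=
  exists s : seq algC, [/\ is_spectrum A s, is_spectrum B s & all (fun a => a \is Num.real) s].

Definition dcycle (N : nat) (D : rel 'I_N) (c : seq 'I_N) : Prop :=
  [/\ c != [::], uniq c & path.cycle D c].

Definition cycle_sign (N : nat) (sg : 'I_N -> 'I_N -> bool) (c : seq 'I_N) : algC :=
  \prod_(x <- c) sign_of (sg x (next c x)).

Definition cycle_balanced (N : nat) (D : rel 'I_N) (sg : 'I_N -> 'I_N -> bool) : Prop :=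
  forall c, dcycle D c -> cycle_sign sg c = 1.

Definition symmetric_digraph (N : nat) (D : rel 'I_N) : Prop :=
  forall u v, D u v -> D v u.

Definition strongly_connected (N : nat) (D : rel 'I_N) : Prop :=
  forall u v, connect D u v.

Definition isomorphic (N : nat) (D1 D2 : rel 'I_N) : Prop :=
  exists f : {perm 'I_N}, forall u v, D1 u v = D2 (f u) (f v).

Definition real_sqc (N : nat) (D1 D2 : rel 'I_N) : Prop :=
  real_cospectral (adj D1) (adj D2) /\
  exists sg1 sg2 : 'I_N -> 'I_N -> bool,
    [/\ ~ cycle_balanced D1 sg1, ~ cycle_balanced D2 sg2
      & real_cospectral (sadj D1 sg1) (sadj D2 sg2)].

(* Main.v *)
Require Import Defs.
From HB Require Import structures.
From mathcomp Require Import all_boot all_order all_algebra all_fingroup all_field.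
From mathcomp Require Import ring zify.
Set Implicit Arguments. Unset Strict Implicit. Unset Printing Implicit Defensive.
Import Order.TTheory GRing.Theory Num.Theory.
Local Open Scope ring_scope.

Lemma charXY (R : comNzRingType) (N m : nat) (X : 'M[R]_(N, m)) (Y : 'M[R]_(m, N)) :
  'X^N * char_poly (Y *m X) = 'X^m * char_poly (X *m Y).
Proof.
pose Xp := map_mx polyC X; pose Yp := map_mx polyC Y.
pose M : 'M[{poly R}]_(m + N) := block_mx ('X%:M) Yp Xp 1%:M.
have h1 : \det M = char_poly (Y *m X).
  have e : M *m block_mx 1%:M 0 (- Xp) 1%:M = block_mx ('X%:M - Yp *m Xp) Yp 0 1%:M.
    rewrite mulmx_block !mulmx1 !mulmx0 !mul1mx.
    by rewrite mulmxN !add0r subrr.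
  have := congr1 determinant e.
  rewrite det_mulmx det_lblock !det1 mulr1 det_ublock det1 mulr1 => ->. 
  by rewrite mulr1 /char_poly /char_poly_mx map_mxM.
have h2 : block_mx 1%:M 0 (- Xp) ('X%:M) *m M = block_mx ('X%:M) Yp 0 ('X%:M - Xp *m Yp).
  rewrite mulmx_block !mul1mx !mul0mx !addr0 mulNmx mul_mx_scalar mul_scalar_mx.
  by rewrite addNr mulmx1 mulNmx addrC.
have := congr1 determinant h2.
rewrite det_mulmx det_lblock det1 mul1r det_ublock !det_scalar h1.
by rewrite /char_poly /char_poly_mx map_mxM => ->; rewrite map_mxM.
Qed.


Definition seg (k T v : nat) : nat :=
  (if v == 0 then 0 else if v == 1 then 1 else if v < k + 4 then 2
  else if v < T then 3 else 4)%N.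

Lemma seg_sum (V : nmodType) (N k T : nat) (G : nat -> V) :
  (k + 4 <= T)%N -> (T <= N)%N ->
  \sum_(j < N) G (seg k T j) =
  G 0%N + G 1%N + G 2%N *+ (k + 2) + G 3%N *+ (T - (k + 4)) + G 4%N *+ (N - T).
Proof.
move=> hk hT.
rewrite -(big_mkord xpredT (fun i => G (seg k T i))).
rewrite (big_cat_nat _ (n := T)) //=; try lia.
rewrite (big_cat_nat _ (n := (k + 4)%N)) //=; try lia.
rewrite (big_cat_nat _ (n := 2%N)) //=; try lia.
rewrite (big_cat_nat _ (n := 1%N)) //=.

rewrite !big_nat1 /seg /=.
congr (_ + _ + _ + _ + _).
- rewrite (eq_big_nat _ _ (F2 := fun=> G 2%N)) ?sumr_const_nat; last first.
    move=> i /andP [h1 h2]; rewrite ifF; try lia.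
    by rewrite ifF ?h2 //; lia.
  by congr (_ *+ _); lia.
- rewrite (eq_big_nat _ _ (F2 := fun=> G 3%N)) ?sumr_const_nat //.
  move=> i /andP [h1 h2]; rewrite ifF; try lia.
  rewrite ifF; try lia.
  by rewrite ltnNge h1 /= h2.
- rewrite (eq_big_nat _ _ (F2 := fun=> G 4%N)) ?sumr_const_nat //.
  move=> i /andP [h1 h2]; rewrite ifF; try lia.
  rewrite ifF; try lia.
  by rewrite ltnNge (leq_trans hk h1) /= ltnNge h1.
Qed.

Definition clsS (a : nat) : nat := (if a == 0 then 1 else if a <= 2 then 0 else 2)%N.
Definition outsetS (c b : nat) : bool :=
  (if c == 0 then (b == 0) || (2 < b) else if c == 1 then b == 2 else b == 1)%N.
Definition sgSc (c b : nat) : bool :=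
  (if c == 0 then b == 3 else if c == 1 then false else true)%N.

Definition Dk (N k T : nat) : rel 'I_N :=
  fun u v => outsetS (clsS (seg k T u)) (seg k T v).
Definition sgk (N k T : nat) : 'I_N -> 'I_N -> bool :=
  fun u v => sgSc (clsS (seg k T u)) (seg k T v).

Definition yf (sgf : nat -> nat -> bool) (c b : nat) : algC :=
  if outsetS c b then sign_of (sgf c b) else 0.
Definition Xm (N k T : nat) : 'M[algC]_(N, 3) :=
  \matrix_(i, c) ((clsS (seg k T i) == c)%:R).
Definition Ym (N k T : nat) (sgf : nat -> nat -> bool) : 'M[algC]_(3, N) :=
  \matrix_(c, j) yf sgf c (seg k T j).

Arguments Dk : clear implicits.
Arguments sgk : clear implicits.
Arguments Xm : clear implicits.
Arguments Ym : clear implicits.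

Lemma factorXY (N k T : nat) (sgf : nat -> nat -> bool) :
  sadj (Dk N k T) (fun u v : 'I_N => sgf (clsS (seg k T u)) (seg k T v)) =
  Xm N k T *m Ym N k T sgf.
Proof.
apply/matrixP => i j; rewrite !mxE !big_ord_recl big_ord0 !mxE /=.
rewrite /Dk /yf; move: (seg k T j) => b.
rewrite /clsS; case: (seg k T i) => [|[|[|a]]] /=;
  rewrite ?mul1r ?mul0r ?addr0 ?add0r //.

Qed.
Definition qpat {R : nzRingType} (p q r t : R) (i j : nat) : R :=
  match i, j with 0, 1 => p | 0, 2 => q | 1, 0 => r | 2, 0 => t | _, _ => 0%R end.
Definition qmat {R : nzRingType} (p q r t : R) : 'M[R]_3 :=
  \matrix_(i < 3, j < 3) qpat p q r t i j.

Lemma char_qmat (R : comNzRingType) (p q r t : R) :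
  char_poly (qmat p q r t) = 'X^3 - (p * r + q * t)%:P * 'X.
Proof.
rewrite /char_poly (expand_det_row _ ord0) !big_ord_recl big_ord0 /cofactor.
rewrite !(expand_det_row _ ord0) !big_ord_recl !big_ord0 /cofactor ?det_mx00.
rewrite !det_mx11 !mxE /= /bump /=.
rewrite rmorphD !rmorphM /=.
rewrite !(mulr1n, mulr0n, subr0, sub0r, expr0, expr1, mul1r, mulr1, mulr0, mul0r, addr0, add0r).
rewrite !add0n !addn0 /=. ring.
Qed.


Lemma YX_entry (N k T : nat) sgf (c d : 'I_3) :
  (k + 4 <= T)%N -> (T <= N)%N ->
  (Ym N k T sgf *m Xm N k T) c d =
  let G b := yf sgf c b * (clsS b == d)%:R in
  G 0%N + G 1%N + G 2%N *+ (k + 2) + G 3%N *+ (T - (k + 4)) + G 4%N *+ (N - T).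
Proof.
move=> hk hT; rewrite !mxE.
under eq_bigr do rewrite !mxE.
exact: (seg_sum (fun b => yf sgf c b * (clsS b == d)%:R)).
Qed.

Lemma YX_unsigned (N k T : nat) : (k + 4 <= T)%N -> (T <= N)%N ->
  Ym N k T (fun _ _ => false) *m Xm N k T =
  qmat 1 ((T - (k + 4) + (N - T))%:R) ((k + 2)%:R) 1.
Proof.
move=> hk hT; apply/matrixP => c d; rewrite YX_entry // mxE /=.
case: c => [[|[|[|c]]] hc] //; case: d => [[|[|[|d]]] hd] //=;
  rewrite /yf /sign_of /= ?expr0 ?mul1r ?mul0r ?mulr1 ?mulr0 ?mul0rn ?addr0 ?add0r ?natrD //.
Qed.

Lemma YX_signed (N k T : nat) : (k + 4 <= T)%N -> (T <= N)%N ->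
  Ym N k T sgSc *m Xm N k T =
  qmat 1 ((N - T)%:R - (T - (k + 4))%:R) ((k + 2)%:R) (-1).
Proof.
move=> hk hT; apply/matrixP => c d; rewrite YX_entry // mxE /=.
case: c => [[|[|[|c]]] hc] //; case: d => [[|[|[|d]]] hd] //=;
  rewrite /yf /sign_of /= ?expr0 ?expr1 ?mul1r ?mul0r ?mulr1 ?mulr0 ?mul0rn ?addr0 ?add0r ?natrD //.
by rewrite mulNrn addrC.
Qed.

Lemma prod_nseq0 m : \prod_(a <- nseq m (0:algC)) ('X - a%:P) = 'X^m.
Proof.
elim: m => [|m IH]; first by rewrite big_nil expr0.
by rewrite /= big_cons IH subr0 exprS.
Qed.

Lemma X3_neq0 : ('X^3 : {poly algC}) != 0.
Proof. by rewrite expf_neq0 // polyX_eq0. Qed.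

Definition spec_u (N : nat) : seq algC :=
  sqrtC (N - 2)%:R :: - sqrtC (N - 2)%:R :: nseq (N - 2) 0.

Lemma spec_unsigned (N k T : nat) : (k + 4 <= T)%N -> (T <= N)%N ->
  is_spectrum (adj (Dk N k T)) (spec_u N).
Proof.
move=> hk hT.
have e := charXY (Xm N k T) (Ym N k T (fun _ _ => false)).
have e2 : adj (Dk N k T) = Xm N k T *m Ym N k T (fun _ _ => false) :=
  factorXY N k T (fun _ _ => false).
rewrite YX_unsigned // char_qmat -e2 in e.
rewrite /is_spectrum; apply: (mulfI X3_neq0); rewrite -e !big_cons prod_nseq0.
have hs : (1 * (k + 2)%:R + (T - (k + 4) + (N - T))%:R * 1 : algC) =
          sqrtC (N - 2)%:R * sqrtC (N - 2)%:R.
  by rewrite -expr2 sqrtCK mul1r mulr1 -natrD; congr (_%:R); lia.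
have hN : N = ((N - 2) + 2)%N by lia.
rewrite hs {1}hN exprD rmorphM /=.
set P := 'X^(N - 2); set r := sqrtC _.
rewrite polyCN; ring.
Qed.

Lemma spec_signed (N k T : nat) : (k + 4 <= T)%N -> (T <= N)%N -> (T + T = N + 2)%N ->
  is_spectrum (sadj (Dk N k T) (sgk N k T)) (nseq N 0).
Proof.
move=> hk hT hTT.
have e := charXY (Xm N k T) (Ym N k T sgSc).
rewrite YX_signed // char_qmat -factorXY in e.
rewrite /is_spectrum; apply: (mulfI X3_neq0); rewrite -e prod_nseq0.
have -> : (1 * (k + 2)%:R + ((N - T)%:R - (T - (k + 4))%:R) * -1 : algC) = 0.
  have -> : (N - T = (T - (k + 4)) + (k + 2))%N by lia.
  rewrite natrD mul1r mulrN1; ring.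
by rewrite mul0r subr0 mulrC.
Qed.

Lemma Dk_noloop N k T : digraph (Dk N k T).
Proof. by move=> v; rewrite /Dk; case: (seg k T v) => [|[|[|[|[|a]]]]]. Qed.

Section Verts.
Variables (N k T : nat).
Hypotheses (hk : (k + 4 <= T)%N) (hT : (T < N)%N).

Let h0 : (0 < N)%N. Proof. lia. Qed.
Let h1 : (1 < N)%N. Proof. lia. Qed.
Let h2 : (2 < N)%N. Proof. lia. Qed.
Let hL : (N.-1 < N)%N. Proof. lia. Qed.
Definition v0 : 'I_N := Ordinal h0.
Definition v1 : 'I_N := Ordinal h1.
Definition v2 : 'I_N := Ordinal h2.
Definition vL : 'I_N := Ordinal hL.

Lemma seg_v0 : seg k T v0 = 0%N. Proof. by []. Qed.
Lemma seg_v1 : seg k T v1 = 1%N. Proof. by []. Qed.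
Lemma seg_v2 : seg k T v2 = 2%N. Proof. by rewrite /seg /=; case: ifP => //; lia. Qed.
Lemma seg_vL : seg k T vL = 4%N.
Proof.
rewrite /seg /=; rewrite ifF; last by lia.
rewrite ifF; last by lia.
rewrite ifF; last by lia.
by rewrite ifF //; lia.
Qed.

Lemma Dk_strong : strongly_connected (Dk N k T).
Proof.
have toL : forall u : 'I_N, (clsS (seg k T u) == 0)%N -> Dk N k T u vL.
  by move=> u /eqP hu; rewrite /Dk seg_vL hu.
have Lto1 : Dk N k T vL v1 by rewrite /Dk seg_vL seg_v1.
have a : forall u : 'I_N, connect (Dk N k T) u v1.
  move=> u; case E: (seg k T u) => [|[|[|[|[|b]]]]].
  - apply: (connect_trans (y := v2)); first by apply: connect1; rewrite /Dk E seg_v2.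
    apply: (connect_trans (y := vL)); first by apply: connect1; apply: toL; rewrite seg_v2.
    exact: connect1.
  - apply: (connect_trans (y := vL)); first by apply: connect1; apply: toL; rewrite E.
    exact: connect1.
  - apply: (connect_trans (y := vL)); first by apply: connect1; apply: toL; rewrite E.
    exact: connect1.
  - by apply: connect1; rewrite /Dk E seg_v1.
  - by apply: connect1; rewrite /Dk E seg_v1.
  - by apply: connect1; rewrite /Dk E seg_v1.
have b : forall v : 'I_N, connect (Dk N k T) v1 v.
  move=> v; case E: (seg k T v) => [|[|[|b]]].
  - by apply: connect1; rewrite /Dk E seg_v1.
  - apply: (connect_trans (y := vL)); first by apply: connect1; apply: toL; rewrite seg_v1.
    by apply: connect1; rewrite /Dk E seg_vL.
  - apply: (connect_trans (y := v0)); first by apply: connect1; rewrite /Dk seg_v0 seg_v1.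
    by apply: connect1; rewrite /Dk E seg_v0.
  - by apply: connect1; rewrite /Dk E seg_v1.
by move=> u v; apply: connect_trans (a u) (b v).
Qed.

Lemma Dk_nonsym : ~ symmetric_digraph (Dk N k T).
Proof.
move=> hs; have := hs v2 vL; rewrite /Dk seg_v2 seg_vL /=.
by move=> /(_ isT).
Qed.

Lemma Dk_unbalanced : ~ cycle_balanced (Dk N k T) (sgk N k T).
Proof.
have hne : v1 != vL by apply/eqP => /(congr1 val) /=; lia.
move=> hb.
have := hb [:: v1; vL].
have hc : dcycle (Dk N k T) [:: v1; vL].
  split => //=; first by rewrite inE andbT.
  by rewrite /Dk seg_v1 seg_vL.
move=> /(_ hc).
rewrite /cycle_sign !big_cons big_nil /next /= eqxx eq_sym (negbTE hne).
rewrite /sgk seg_v1 seg_vL /= /sign_of /= expr0 expr1 mul1r mulr1 => /eqP.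
rewrite -subr_eq0 -opprD oppr_eq0.
by rewrite -(natrD _ 1 1) pnatr_eq0.
Qed.

End Verts.

Definition outdeg (N k T : nat) (u : 'I_N) : algC :=
  \sum_(v < N) ((Dk N k T u v)%:R : algC).

Lemma outdeg_val N k T (u : 'I_N) : (k + 4 <= T)%N -> (T <= N)%N ->
  outdeg k T u = (if clsS (seg k T u) == 0 then N - k - 3
                  else if clsS (seg k T u) == 1 then k + 2 else 1)%N%:R.
Proof.
move=> hk hT; rewrite /outdeg /Dk.
rewrite (seg_sum (fun b => ((outsetS (clsS (seg k T u)) b)%:R : algC))) //.
case: (seg k T u) => [|[|[|a]]] /=; rewrite ?mul0rn ?addr0 ?add0r //.
- rewrite -!natrD; congr (_ %:R); lia.
- rewrite -!natrD; congr (_ %:R); lia.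
Qed.

Lemma Dk_noniso N k l T : (k + 4 <= T)%N -> (l + 4 <= T)%N -> (T < N)%N ->
  (k + l + 5 < N)%N -> k != l -> ~ isomorphic (Dk N k T) (Dk N l T).
Proof.
move=> hk hl hT hkl kl [f hf].
have e : outdeg k T (v0 hk hT) = outdeg l T (f (v0 hk hT)).
  rewrite /outdeg [RHS](reindex_inj (@perm_inj _ f)) /=.
  by apply: eq_bigr => v _; rewrite hf.
rewrite !outdeg_val ?(ltnW hT) // seg_v0 /= in e.
move/eqP: e; rewrite eqr_nat.
case: ifP => _; first by move/eqP; lia.
case: ifP => _; last by move/eqP; lia.
by move/eqP => /eqP; rewrite eqn_add2r (negbTE kl).
Qed.

Lemma nseq_real N : all (fun a : algC => a \is Num.real) (nseq N 0).
Proof. by elim: N => //= m ->; rewrite real0. Qed.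

Lemma spec_u_real N : all (fun a => a \is Num.real) (spec_u N).
Proof.
rewrite /spec_u /= realN.
have -> : sqrtC ((N - 2)%:R : algC) \is Num.real by rewrite realE sqrtC_ge0 ler0n.
by rewrite /= nseq_real.
Qed.



Local Close Scope ring_scope.

Theorem theorem2p16 (n : nat) : (4 <= n)%N ->
  exists Ds : 'I_n -> rel 'I_(4 ^ n),
    (forall k, [/\ digraph (Ds k), strongly_connected (Ds k) & ~ symmetric_digraph (Ds k)]) /\
    (forall k l, k != l -> ~ isomorphic (Ds k) (Ds l) /\ real_sqc (Ds k) (Ds l)).
Proof.
move=> hn.
pose x := (4 ^ n.-1)%N.
have hN : (4 ^ n = 4 * x)%N by rewrite /x -expnS prednK //; lia.
have hx : (n.-1 < x)%N by apply: ltn_expl.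
pose T := (2 * x + 1)%N.
have hkT : forall k : 'I_n, (k + 4 <= T)%N by move=> k; have := ltn_ord k; lia.
have hTN : (T < 4 ^ n)%N by rewrite hN; lia.
have hTT : (T + T = 4 ^ n + 2)%N by rewrite hN; lia.
exists (fun k : 'I_n => Dk (4 ^ n) k T); split.
  move=> k; split; [exact: Dk_noloop | exact: Dk_strong (hkT k) hTN |
    exact: Dk_nonsym (hkT k) hTN].
move=> k l kl; split.
  apply: Dk_noniso (hkT k) (hkT l) hTN _ kl.
  have := ltn_ord k; have := ltn_ord l; rewrite hN; lia.
split.
  exists (spec_u (4 ^ n)); split.
  - exact: spec_unsigned (hkT k) (ltnW hTN).
  - exact: spec_unsigned (hkT l) (ltnW hTN).
  - exact: spec_u_real.
exists (sgk (4 ^ n) k T), (sgk (4 ^ n) l T); split.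
- exact: Dk_unbalanced (hkT k) hTN.
- exact: Dk_unbalanced (hkT l) hTN.
- exists (nseq (4 ^ n) (0%R : algC)); split.
  + exact: spec_signed (hkT k) (ltnW hTN) hTT.
  + exact: spec_signed (hkT l) (ltnW hTN) hTT.
  + exact: nseq_real.
Qed.
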